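(* Let $\mathbb{T}=\mathbb{R}/2\pi\mathbb{Z}$, let $(a_k)_{k\ge1},(b_k)_{k\ge1}$ be independent stationary centered Gaussian sequences with common correlation function $\rho$ ($\mathbb{E}[a_ka_l]=\mathbb{E}[b_kb_l]=\rho(k-l)$), whose spectral measure $\mu$ (defined by $\rho(k)=\frac1{2\pi}\int_{\mathbb{T}}e^{-iku}d\mu(u)$) has a continuous positive density $\psi$ with respect to Lebesgue measure on $\mathbb{T}$. Let $X_n(s)=\frac{1}{\sqrt n}\sum_{k=1}^n(a_k\cos(ks)+b_k\sin(ks))$ and $r_n(s,t)=\mathbb{E}[X_n(s)X_n(t)]$. Let $a,b\in\{0,1,2,3,4\}$. Then, uniformly for $s\in\mathbb{T}$ and $u,v$ in any compact subset of $\mathbb{R}$, \[\lim_{n\to+\infty}\frac{1}{n^{a+b}}\,r_n^{(a,b)}\Big(s+\frac un,s+\frac vn\Big)=\psi(s)(-1)^b\,\mathrm{sinc}^{(a+b)}(u-v).\]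
   Context: $r_n^{(a,b)}=\partial_1^a\partial_2^b r_n$; $\mathrm{sinc}(x)=\sin x/x$ and $\mathrm{sinc}^{(m)}$ is its $m$-th derivative. *)

(* Defs.v *)
From Stdlib Require Import Reals ZArith.
From Coquelicot Require Import Coquelicot.
Open Scope R_scope.

Definition sinc (x : R) : R := if Req_EM_T x 0 then 1 else sin x / x.

(* r_n(s,t) = E[X_n(s) X_n(t)] for X_n(s) = n^{-1/2} sum_{k=1}^n (a_k cos(ks) + b_k sin(ks)),
   with (a_k),(b_k) independent centred, E[a_k a_l] = E[b_k b_l] = rho(k-l):
   E[X_n(s)X_n(t)] = 1/n sum_{k,l=1}^n rho(k-l) (cos(ks)cos(lt) + sin(ks)sin(lt)). *)
Definition rn (rho : Z -> R) (n : nat) (s t : R) : R :=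
  / INR n *
  sum_n_m (fun k =>
    sum_n_m (fun l =>
      rho (Z.of_nat k - Z.of_nat l)%Z *
      (cos (INR k * s) * cos (INR l * t) + sin (INR k * s) * sin (INR l * t)))
    1 n) 1 n.

Definition rn_deriv (rho : Z -> R) (n a b : nat) (s t : R) : R :=
  Derive_n (fun x => Derive_n (fun y => rn rho n x y) b t) a s.

(* psi is a continuous positive density on T = R/2piZ (a 2pi-periodic function on R)
   of the spectral measure of rho:
   rho(k) = 1/(2pi) int_T e^{-iku} psi(u) du, split into real and imaginary parts. *)
Definition spectral_density (rho : Z -> R) (psi : R -> R) : Prop :=
  (forall x, continuous psi x) /\
  (forall x, psi (x + 2 * PI) = psi x) /\
  (forall x, 0 < psi x) /\
  (forall k : Z,
     rho k = / (2 * PI) * RInt (fun u => cos (IZR k * u) * psi u) 0 (2 * PI) /\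
     RInt (fun u => sin (IZR k * u) * psi u) 0 (2 * PI) = 0).

(* Main.v *)
Require Import Defs.
From Stdlib Require Import Reals ZArith Lra Lia.
From Coquelicot Require Import Coquelicot.
Open Scope R_scope.
Ltac req := match goal with |- ?a = ?b => change (@eq R a b) end.
Fixpoint S1 (n : nat) (f : nat -> R) : R :=
  match n with O => 0 | S n' => S1 n' f + f n end.

Lemma sum_n_m_S1 (f : nat -> R) n : sum_n_m f 1 n = S1 n f.
Proof.
  induction n as [|n IH].
  - rewrite sum_n_m_zero; [reflexivity|lia].
  - destruct n as [|n].
    + rewrite sum_n_n. simpl. ring.
    + rewrite sum_n_Sm by lia. rewrite IH. reflexivity.
Qed.

Lemma S1_ext n f g : (forall k, f k = g k) -> S1 n f = S1 n g.
Proof. intros H; induction n; simpl; [reflexivity|]. rewrite IHn, H; reflexivity. Qed.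

Lemma S1_ext_le n f g : (forall k, (1 <= k <= n)%nat -> f k = g k) -> S1 n f = S1 n g.
Proof. intros H; induction n; simpl; [reflexivity|].
  rewrite IHn by (intros; apply H; lia). rewrite H by lia; reflexivity. Qed.

Lemma S1_plus n f g : S1 n (fun k => f k + g k) = S1 n f + S1 n g.
Proof. induction n; simpl; [ring| rewrite IHn; ring]. Qed.

Lemma S1_scal n c f : S1 n (fun k => c * f k) = c * S1 n f.
Proof. induction n; simpl; [ring| rewrite IHn; ring]. Qed.

Lemma S1_zero n : S1 n (fun _ => 0) = 0.
Proof. induction n; simpl; [ring| rewrite IHn; ring]. Qed.

Lemma S1_bilin n p q : S1 n (fun k => S1 n (fun l => p k * q l)) = S1 n p * S1 n q.
Proof.
  transitivity (S1 n (fun k => p k * S1 n q)).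
  - apply S1_ext; intro k; apply S1_scal.
  - rewrite Rmult_comm, <- S1_scal. apply S1_ext; intro; ring.
Qed.

Lemma S1_le n f g : (forall k, (1 <= k <= n)%nat -> f k <= g k) -> S1 n f <= S1 n g.
Proof. intros H; induction n; simpl; [lra|].
  assert (S1 n f <= S1 n g) by (apply IHn; intros; apply H; lia).
  assert (f (S n) <= g (S n)) by (apply H; lia). lra. Qed.

Lemma S1_abs n f : Rabs (S1 n f) <= S1 n (fun k => Rabs (f k)).
Proof. induction n; simpl. rewrite Rabs_R0; lra.
  eapply Rle_trans; [apply Rabs_triang|]. lra. Qed.

Lemma S1_const_le n f c : (forall k, (1 <= k <= n)%nat -> f k <= c) -> S1 n f <= INR n * c.
Proof. intros H; induction n; cbn [S1]. simpl; lra.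
  assert (S1 n f <= INR n * c) by (apply IHn; intros; apply H; lia).
  assert (f (S n) <= c) by (apply H; lia). rewrite S_INR. lra. Qed.

Lemma is_derive_S1 n (g : nat -> R -> R) (g' : nat -> R) y :
  (forall k, is_derive (g k) y (g' k)) ->
  is_derive (fun y => S1 n (fun k => g k y)) y (S1 n g').
Proof.
  intros H; induction n; simpl.
  - apply (is_derive_const 0 y).
  - apply (is_derive_plus (fun y => S1 n (fun k => g k y)) (g (S n))); auto.
Qed.

Definition TS n (al : nat -> nat -> R) x y ph :=
  S1 n (fun k => S1 n (fun l => al k l * cos (INR k * x - INR l * y + ph))).

Lemma TS_ext n al be x y ph ph' : (forall k l, al k l = be k l) -> ph = ph' ->
  TS n al x y ph = TS n be x y ph'.
Proof. intros H ->; unfold TS; apply S1_ext; intro k; apply S1_ext; intro l; rewrite H; reflexivity. Qed.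

Lemma cos_mPI2 t : cos (t - PI/2) = sin t.
Proof. rewrite cos_minus, cos_PI2, sin_PI2; ring. Qed.
Lemma cos_pPI2 t : cos (t + PI/2) = - sin t.
Proof. rewrite cos_plus, cos_PI2, sin_PI2; ring. Qed.

Lemma TS_dy n al x y ph :
  is_derive (fun y => TS n al x y ph) y (TS n (fun k l => al k l * INR l) x y (ph - PI/2)).
Proof.
  unfold TS. apply is_derive_S1; intro k. apply is_derive_S1; intro l.
  auto_derive; [exact I|].
  replace (INR k * x - INR l * y + (ph - PI / 2)) with ((INR k * x - INR l * y + ph) - PI/2) by lra.
  rewrite cos_mPI2. unfold Rminus. lra.
Qed.

Lemma TS_dx n al x y ph :
  is_derive (fun x => TS n al x y ph) x (TS n (fun k l => al k l * INR k) x y (ph + PI/2)).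
Proof.
  unfold TS. apply is_derive_S1; intro k. apply is_derive_S1; intro l.
  auto_derive; [exact I|].
  replace (INR k * x - INR l * y + (ph + PI / 2)) with ((INR k * x - INR l * y + ph) + PI/2) by lra.
  rewrite cos_pPI2. unfold Rminus. lra.
Qed.

Lemma TS_Dny n al x ph b y :
  Derive_n (fun y => TS n al x y ph) b y = TS n (fun k l => al k l * INR l ^ b) x y (ph - INR b * (PI/2)).
Proof.
  revert y; induction b; intro y.
  - simpl. apply TS_ext; [intros; ring | ring].
  - simpl Derive_n. rewrite (Derive_ext _ _ _ IHb).
    rewrite (is_derive_unique _ _ _ (TS_dy _ _ _ _ _)).
    apply TS_ext; [intros; simpl; ring | rewrite S_INR; ring].
Qed.

Lemma TS_Dnx n al y ph a x :
  Derive_n (fun x => TS n al x y ph) a x = TS n (fun k l => al k l * INR k ^ a) x y (ph + INR a * (PI/2)).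
Proof.
  revert x; induction a; intro x.
  - simpl. apply TS_ext; [intros; ring | ring].
  - simpl Derive_n. rewrite (Derive_ext _ _ _ IHa).
    rewrite (is_derive_unique _ _ _ (TS_dx _ _ _ _ _)).
    apply TS_ext; [intros; simpl; ring | rewrite S_INR; ring].
Qed.

Lemma rn_TS rho n x y : rn rho n x y =
  / INR n * TS n (fun k l => rho (Z.of_nat k - Z.of_nat l)%Z) x y 0.
Proof.
  unfold rn, TS. f_equal. rewrite sum_n_m_S1. apply S1_ext; intro k.
  rewrite sum_n_m_S1. apply S1_ext; intro l. f_equal.
  rewrite Rplus_0_r, cos_minus. reflexivity.
Qed.

Lemma rn_deriv_TS rho n a b s t : rn_deriv rho n a b s t =
  / INR n * TS n (fun k l => rho (Z.of_nat k - Z.of_nat l)%Z * (INR k ^ a * INR l ^ b)) s t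
     (INR a * (PI/2) - INR b * (PI/2)).
Proof.
  unfold rn_deriv.
  rewrite (Derive_n_ext _ (fun x => / INR n *
     TS n (fun k l => rho (Z.of_nat k - Z.of_nat l)%Z * INR l ^ b) x t (0 - INR b * (PI/2)))).
  2:{ intro x. rewrite (Derive_n_ext _ (fun y => / INR n * TS n (fun k l => rho (Z.of_nat k - Z.of_nat l)%Z) x y 0)).
      2:{ intro; apply rn_TS. }
      rewrite Derive_n_scal_l, TS_Dny. reflexivity. }
  rewrite Derive_n_scal_l, TS_Dnx. f_equal. apply TS_ext; [intros; ring| ring].
Qed.

Lemma ex_RInt_S1 n (f : nat -> R -> R) a b :
  (forall k, ex_RInt (f k) a b) -> ex_RInt (fun x => S1 n (fun k => f k x)) a b.
Proof.
  intros H; induction n; simpl.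
  - apply ex_RInt_const.
  - apply (ex_RInt_plus (fun x => S1 n (fun k => f k x)) (f (S n))); auto.
Qed.

Lemma RInt_S1 n (f : nat -> R -> R) a b :
  (forall k, ex_RInt (f k) a b) ->
  RInt (fun x => S1 n (fun k => f k x)) a b = S1 n (fun k => RInt (f k) a b).
Proof.
  intros H; induction n; simpl.
  - rewrite RInt_const. unfold scal; simpl; unfold mult; simpl; ring.
  - rewrite <- IHn. apply (RInt_plus (fun x => S1 n (fun k => f k x)) (f (S n))); auto.
    apply ex_RInt_S1; auto.
Qed.

Lemma RInt_lin2 (f g : R -> R) c1 c2 a b : ex_RInt f a b -> ex_RInt g a b ->
  RInt (fun x => c1 * f x + c2 * g x) a b = c1 * RInt f a b + c2 * RInt g a b.
Proof.
  intros Hf Hg.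
  rewrite (RInt_plus (fun x => c1 * f x) (fun x => c2 * g x)).
  - pose proof (RInt_scal f a b c1 Hf) as E1. pose proof (RInt_scal g a b c2 Hg) as E2.
    simpl in E1, E2. unfold scal in E1, E2; simpl in E1, E2; unfold mult in E1, E2; simpl in E1, E2.
    unfold plus; simpl. rewrite E1, E2. reflexivity.
  - apply (ex_RInt_scal f a b c1 Hf).
  - apply (ex_RInt_scal g a b c2 Hg).
Qed.

Lemma RInt_lin1 (f : R -> R) c a b : ex_RInt f a b ->
  RInt (fun x => c * f x) a b = c * RInt f a b.
Proof. intros Hf. pose proof (RInt_scal f a b c Hf) as E1.
  unfold scal in E1; simpl in E1; unfold mult in E1; simpl in E1. exact E1. Qed.

Lemma cont_cos_lin k l s t ph x :
  continuous (fun x => cos (INR k * (s - x) - INR l * (t - x) + ph)) x.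
Proof. apply (@ex_derive_continuous R_AbsRing R_NormedModule). auto_derive. exact I. Qed.

Lemma exRInt_cos_lin k l s t ph a b :
  ex_RInt (fun x => cos (INR k * (s - x) - INR l * (t - x) + ph)) a b.
Proof. apply (@ex_RInt_continuous R_CompleteNormedModule); intros; apply cont_cos_lin. Qed.

Lemma exRInt_psi_cos (psi : R -> R) k l s t ph a b : (forall x, continuous psi x) ->
  ex_RInt (fun x => psi x * cos (INR k * (s - x) - INR l * (t - x) + ph)) a b.
Proof. intros Hp. apply (@ex_RInt_continuous R_CompleteNormedModule); intros.
  apply (continuous_mult psi); [apply Hp| apply cont_cos_lin]. Qed.

Lemma exRInt_TS n be s t ph a b :
  ex_RInt (fun x => TS n be (s - x) (t - x) ph) a b.
Proof.
  unfold TS. apply (ex_RInt_S1 n (fun k x => S1 n (fun l => be k l * cos (INR k * (s - x) - INR l * (t - x) + ph)))).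
  intro k. apply (ex_RInt_S1 n (fun l x => be k l * cos (INR k * (s - x) - INR l * (t - x) + ph))).
  intro l. apply (ex_RInt_scal (fun x => cos (INR k * (s - x) - INR l * (t - x) + ph))).
  apply exRInt_cos_lin.
Qed.

Lemma exRInt_psi_TS (psi : R -> R) n be s t ph a b : (forall x, continuous psi x) ->
  ex_RInt (fun x => psi x * TS n be (s - x) (t - x) ph) a b.
Proof.
  intros Hp.
  apply ex_RInt_ext with (fun x => S1 n (fun k => S1 n (fun l => be k l * (psi x * cos (INR k * (s - x) - INR l * (t - x) + ph))))).
  { intros. unfold TS. rewrite <- S1_scal. apply S1_ext; intro k. rewrite <- S1_scal.
    apply S1_ext; intro l. ring. }
  apply (ex_RInt_S1 n (fun k x => S1 n (fun l => be k l * (psi x * cos (INR k * (s - x) - INR l * (t - x) + ph))))).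
  intro k. apply (ex_RInt_S1 n (fun l x => be k l * (psi x * cos (INR k * (s - x) - INR l * (t - x) + ph)))).
  intro l. apply (ex_RInt_scal (fun x => psi x * cos (INR k * (s - x) - INR l * (t - x) + ph))).
  apply exRInt_psi_cos; auto.
Qed.

Lemma IZR_diff k l : IZR (Z.of_nat k - Z.of_nat l) = INR k - INR l.
Proof. rewrite minus_IZR, <- !INR_IZR_INZ. reflexivity. Qed.

Lemma rho_term rho psi (Hs : spectral_density rho psi) k l s t ph :
  RInt (fun x => psi x * cos (INR k * (s - x) - INR l * (t - x) + ph)) 0 (2 * PI) =
  2 * PI * (rho (Z.of_nat k - Z.of_nat l)%Z * cos (INR k * s - INR l * t + ph)).
Proof.
  destruct Hs as [Hc [_ [_ Hr]]].
  set (j := (Z.of_nat k - Z.of_nat l)%Z). destruct (Hr j) as [H1 H2].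
  set (A := INR k * s - INR l * t + ph).
  rewrite (RInt_ext _ (fun x => cos A * (cos (IZR j * x) * psi x) + sin A * (sin (IZR j * x) * psi x))).
  2:{ intros x _. unfold j; rewrite IZR_diff.
      replace (INR k * (s - x) - INR l * (t - x) + ph) with (A - (INR k - INR l) * x) by (unfold A; ring).
      rewrite cos_minus. change (@eq R (psi x * (cos A * cos ((INR k - INR l) * x) + sin A * sin ((INR k - INR l) * x))) (cos A * (cos ((INR k - INR l) * x) * psi x) + sin A * (sin ((INR k - INR l) * x) * psi x))). ring. }
  rewrite RInt_lin2.
  - rewrite H2, H1. assert (PI > 0) by apply PI_RGT_0. req. field. lra.
  - apply (@ex_RInt_continuous R_CompleteNormedModule); intros. apply (continuous_mult (fun x => cos (IZR j * x))); [|apply Hc].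
    apply (@ex_derive_continuous R_AbsRing R_NormedModule); auto_derive; exact I.
  - apply (@ex_RInt_continuous R_CompleteNormedModule); intros. apply (continuous_mult (fun x => sin (IZR j * x))); [|apply Hc].
    apply (@ex_derive_continuous R_AbsRing R_NormedModule); auto_derive; exact I.
Qed.

Lemma rho_TS rho psi (Hs : spectral_density rho psi) n be s t ph :
  RInt (fun x => psi x * TS n be (s - x) (t - x) ph) 0 (2 * PI) =
  2 * PI * TS n (fun k l => rho (Z.of_nat k - Z.of_nat l)%Z * be k l) s t ph.
Proof.
  assert (Hc : forall x, continuous psi x) by apply Hs.
  rewrite (RInt_ext _ (fun x => S1 n (fun k => S1 n (fun l => be k l * (psi x * cos (INR k * (s - x) - INR l * (t - x) + ph)))))).
  2:{ intros. unfold TS. rewrite <- S1_scal. apply S1_ext; intro k. rewrite <- S1_scal.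
    apply S1_ext; intro l. ring. }
  rewrite (RInt_S1 n (fun k x => S1 n (fun l => be k l * (psi x * cos (INR k * (s - x) - INR l * (t - x) + ph))))).
  2:{ intro k. apply (ex_RInt_S1 n (fun l x => be k l * (psi x * cos (INR k * (s - x) - INR l * (t - x) + ph)))).
      intro l. apply (ex_RInt_scal (fun x => psi x * cos (INR k * (s - x) - INR l * (t - x) + ph))).
      apply exRInt_psi_cos; auto. }
  unfold TS. rewrite <- S1_scal. apply S1_ext; intro k.
  rewrite (RInt_S1 n (fun l x => be k l * (psi x * cos (INR k * (s - x) - INR l * (t - x) + ph)))).
  2:{ intro l. apply (ex_RInt_scal (fun x => psi x * cos (INR k * (s - x) - INR l * (t - x) + ph))).
      apply exRInt_psi_cos; auto. }
  rewrite <- S1_scal. apply S1_ext; intro l.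
  rewrite RInt_lin1 by (apply exRInt_psi_cos; auto).
  rewrite (rho_term rho psi Hs). ring.
Qed.

Lemma sin_int_period A k l : sin (A - 2 * PI * (INR k - INR l)) = sin A.
Proof.
  replace (A - 2 * PI * (INR k - INR l)) with ((A - 2 * PI * INR k) + 2 * INR l * PI) by ring.
  rewrite sin_period.
  rewrite <- (sin_period (A - 2 * PI * INR k) k). f_equal. ring.
Qed.

Lemma int_cos_term k l s t ph :
  RInt (fun x => cos (INR k * (s - x) - INR l * (t - x) + ph)) 0 (2 * PI) =
  if Nat.eqb k l then 2 * PI * cos (INR k * (s - t) + ph) else 0.
Proof.
  destruct (Nat.eqb_spec k l) as [<-|Hkl].
  - rewrite (RInt_ext _ (fun _ => cos (INR k * (s - t) + ph))).
    + rewrite RInt_const. unfold scal; simpl; unfold mult; simpl. req; ring.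
    + intros x _. f_equal. ring.
  - set (j := INR k - INR l). set (A := INR k * s - INR l * t + ph).
    assert (Hj : j <> 0).
    { unfold j; intro E. apply Hkl. apply INR_eq. lra. }
    assert (Hi : is_RInt (fun x => cos (INR k * (s - x) - INR l * (t - x) + ph)) 0 (2 * PI)
                  (minus (- sin (A - j * (2 * PI)) / j) (- sin (A - j * 0) / j))).
    { apply (is_RInt_derive (fun x => - sin (A - j * x) / j)).
      - intros x _. auto_derive; [exact I|].
        replace (INR k * (s - x) - INR l * (t - x) + ph) with (A + - (j * x)) by (unfold A, j; ring).
        field. exact Hj.
      - intros x _. apply cont_cos_lin. }
    rewrite (is_RInt_unique _ _ _ _ Hi).
    replace (A - j * (2 * PI)) with (A - 2 * PI * (INR k - INR l)) by (unfold j; ring).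
    rewrite sin_int_period. unfold minus, plus, opp; simpl. replace (A - j * 0) with A by ring. ring.
Qed.

Lemma S1_delta_out n k c : (n < k)%nat -> S1 n (fun l => if Nat.eqb k l then c else 0) = 0.
Proof. induction n; intros H; simpl; [reflexivity|].
  rewrite IHn by lia. destruct (Nat.eqb_spec k (S n)); [lia|ring]. Qed.

Lemma S1_delta n k c : (1 <= k <= n)%nat -> S1 n (fun l => if Nat.eqb k l then c else 0) = c.
Proof. induction n; intros H; [lia|]. simpl.
  destruct (Nat.eqb_spec k (S n)) as [->|Hk].
  - rewrite S1_delta_out by lia. ring.
  - rewrite IHn by lia. ring.
Qed.

Lemma int_TS n be s t ph :
  RInt (fun x => TS n be (s - x) (t - x) ph) 0 (2 * PI) =
  2 * PI * S1 n (fun k => be k k * cos (INR k * (s - t) + ph)).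
Proof.
  unfold TS.
  rewrite (RInt_S1 n (fun k x => S1 n (fun l => be k l * cos (INR k * (s - x) - INR l * (t - x) + ph)))).
  2:{ intro k. apply (ex_RInt_S1 n (fun l x => be k l * cos (INR k * (s - x) - INR l * (t - x) + ph))).
      intro l. apply (ex_RInt_scal (fun x => cos (INR k * (s - x) - INR l * (t - x) + ph))).
      apply exRInt_cos_lin. }
  rewrite <- S1_scal. apply S1_ext_le; intros k Hk.
  rewrite (RInt_S1 n (fun l x => be k l * cos (INR k * (s - x) - INR l * (t - x) + ph))).
  2:{ intro l. apply (ex_RInt_scal (fun x => cos (INR k * (s - x) - INR l * (t - x) + ph))).
      apply exRInt_cos_lin. }
  rewrite (S1_ext _ _ (fun l => if Nat.eqb k l then be k k * (2 * PI * cos (INR k * (s - t) + ph)) else 0)).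
  - rewrite S1_delta by lia. ring.
  - intro l. rewrite RInt_lin1 by apply exRInt_cos_lin. rewrite int_cos_term.
    destruct (Nat.eqb_spec k l) as [<-|]; ring.
Qed.

Definition Cs n a y c := S1 n (fun k => INR k ^ a * cos (INR k * y + c)).

Lemma Rabs_sin_le1 x : Rabs (sin x) <= 1.
Proof. pose proof (SIN_bound x). apply Rabs_le; lra. Qed.

Lemma abel_aux n a y c :
  Rabs (2 * sin (y/2) * Cs n a y c - INR n ^ a * sin ((INR n + /2) * y + c)) <= INR n ^ a.
Proof.
  induction n.
  - unfold Cs; simpl S1. simpl INR.
    assert (0 <= 0 ^ a) by (apply pow_le; lra).
    replace (2 * sin (y / 2) * 0 - 0 ^ a * sin ((0 + / 2) * y + c)) with ((0 ^ a) * (- sin ((0 + / 2) * y + c))) by ring.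
    rewrite Rabs_mult, Rabs_Ropp, (Rabs_pos_eq (0 ^ a)) by lra.
    pose proof (Rabs_sin_le1 ((0 + / 2) * y + c)). nra.
  - unfold Cs in *; cbn [S1]. rewrite S_INR.
    set (P := sin ((INR n + /2) * y + c)).
    set (Q := sin ((INR n + 1 + /2) * y + c)).
    assert (Hid : 2 * sin (y/2) * cos ((INR n + 1) * y + c) = Q - P).
    { unfold P, Q.
      replace ((INR n + 1 + /2) * y + c) with (((INR n + 1) * y + c) + y/2) by field.
      replace ((INR n + /2) * y + c) with (((INR n + 1) * y + c) - y/2) by field.
      rewrite sin_plus, sin_minus. ring. }
    assert (Hid' : 2 * sin (y/2) * ((INR n + 1) ^ a * cos ((INR n + 1) * y + c)) = (INR n + 1) ^ a * (Q - P)).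
    { rewrite <- Hid. ring. }
    set (S0 := S1 n (fun k : nat => INR k ^ a * cos (INR k * y + c))) in *.
    replace (2 * sin (y / 2) * (S0 + (INR n + 1) ^ a * cos ((INR n + 1) * y + c)) - (INR n + 1) ^ a * Q)
      with ((2 * sin (y / 2) * S0 - INR n ^ a * P) + (INR n ^ a - (INR n + 1) ^ a) * P).
    2:{ rewrite Rmult_plus_distr_l, Hid'. ring. }
    set (E := 2 * sin (y / 2) * S0 - INR n ^ a * P) in *.
    assert (Hm : INR n ^ a <= (INR n + 1) ^ a) by (apply pow_incr; pose proof (pos_INR n); lra).
    pose proof (Rabs_sin_le1 ((INR n + /2) * y + c)) as HP. fold P in HP.
    eapply Rle_trans; [apply Rabs_triang|]. rewrite Rabs_mult.
    rewrite (Rabs_left1 (INR n ^ a - (INR n + 1) ^ a)) by lra.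
    assert (0 <= Rabs P) by apply Rabs_pos. fold P in IHn. fold E in IHn.
    assert (0 <= ((INR n + 1) ^ a - INR n ^ a) * (1 - Rabs P)) by (apply Rmult_le_pos; lra). nra.
Qed.

Lemma abel n a y c : Rabs (sin (y/2) * Cs n a y c) <= INR n ^ a.
Proof.
  pose proof (abel_aux n a y c) as H.
  set (E := 2 * sin (y / 2) * Cs n a y c - INR n ^ a * sin ((INR n + / 2) * y + c)) in H.
  assert (2 * (sin (y / 2) * Cs n a y c) = E + INR n ^ a * sin ((INR n + / 2) * y + c)) by (unfold E; ring).
  assert (Rabs (INR n ^ a * sin ((INR n + / 2) * y + c)) <= INR n ^ a).
  { rewrite Rabs_mult, (Rabs_pos_eq (INR n ^ a)) by (apply pow_le, pos_INR).
    pose proof (Rabs_sin_le1 ((INR n + / 2) * y + c)). pose proof (pow_le (INR n) a (pos_INR n)). nra. }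
  assert (Rabs (2 * (sin (y / 2) * Cs n a y c)) <= 2 * INR n ^ a).
  { rewrite H0. eapply Rle_trans; [apply Rabs_triang|]. lra. }
  rewrite Rabs_mult, Rabs_pos_eq in H2 by lra. lra.
Qed.

Definition Ca n a y := Cs n a y 0.
Definition Sa n a y := Cs n a y (- (PI/2)).
Definition PA n a y := Ca n a y ^ 2 + Sa n a y ^ 2.

Lemma S1_bilin4 n (p1 q1 p2 q2 p3 q3 p4 q4 : nat -> R) :
  S1 n (fun k => S1 n (fun l => p1 k * q1 l + p2 k * q2 l + p3 k * q3 l + p4 k * q4 l)) =
  S1 n p1 * S1 n q1 + S1 n p2 * S1 n q2 + S1 n p3 * S1 n q3 + S1 n p4 * S1 n q4.
Proof.
  rewrite <- !S1_bilin. rewrite <- !S1_plus. try (apply S1_ext; intro k; rewrite <- !S1_plus; reflexivity).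
Qed.

Lemma TS_decomp n a b y z ph :
  TS n (fun k l => INR k ^ a * INR l ^ b) y z ph =
  cos ph * (Ca n a y * Ca n b z + Sa n a y * Sa n b z) - sin ph * (Sa n a y * Ca n b z - Ca n a y * Sa n b z).
Proof.
  unfold TS.
  rewrite (S1_ext _ _ (fun k => S1 n (fun l =>
     (cos ph * (INR k ^ a * cos (INR k * y))) * (INR l ^ b * cos (INR l * z)) +
     (cos ph * (INR k ^ a * sin (INR k * y))) * (INR l ^ b * sin (INR l * z)) +
     (- sin ph * (INR k ^ a * sin (INR k * y))) * (INR l ^ b * cos (INR l * z)) +
     (sin ph * (INR k ^ a * cos (INR k * y))) * (INR l ^ b * sin (INR l * z))))).
  2:{ intro k. apply S1_ext; intro l.
      replace (INR k * y - INR l * z + ph) with ((INR k * y - INR l * z) + ph) by ring.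
      rewrite cos_plus, sin_minus, cos_minus. ring. }
  rewrite S1_bilin4.
  assert (E1 : forall c, S1 n (fun k => c * (INR k ^ a * cos (INR k * y))) = c * Ca n a y).
  { intro c. rewrite S1_scal. f_equal. unfold Ca, Cs. apply S1_ext; intro k. rewrite Rplus_0_r. reflexivity. }
  assert (E2 : forall c, S1 n (fun k => c * (INR k ^ a * sin (INR k * y))) = c * Sa n a y).
  { intro c. rewrite S1_scal. f_equal. unfold Sa, Cs. apply S1_ext; intro k.
    rewrite <- cos_mPI2; f_equal; f_equal; try ring. }
  assert (E3 : S1 n (fun l => INR l ^ b * cos (INR l * z)) = Ca n b z).
  { unfold Ca, Cs. apply S1_ext; intro k. rewrite Rplus_0_r. reflexivity. }
  assert (E4 : S1 n (fun l => INR l ^ b * sin (INR l * z)) = Sa n b z).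
  { unfold Sa, Cs. apply S1_ext; intro k. rewrite <- cos_mPI2; f_equal; f_equal; try ring. }
  rewrite !E1, !E2, E3, E4. ring.
Qed.

Lemma PA_TS n a y : PA n a y = TS n (fun k l => INR k ^ a * INR l ^ a) y y 0.
Proof. rewrite TS_decomp, cos_0, sin_0. unfold PA. ring. Qed.

Lemma PA_nonneg n a y : 0 <= PA n a y.
Proof. unfold PA. nra. Qed.

Lemma TS_sq_le n a b y z ph :
  (TS n (fun k l => INR k ^ a * INR l ^ b) y z ph) ^ 2 <= PA n a y * PA n b z.
Proof.
  rewrite TS_decomp. unfold PA.
  set (c := cos ph). set (s := sin ph).
  assert (Hcs : s ^ 2 + c ^ 2 = 1) by (unfold s, c; pose proof (sin2_cos2 ph); unfold Rsqr in H; lra).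
  set (X := Ca n a y * Ca n b z + Sa n a y * Sa n b z).
  set (Y := Sa n a y * Ca n b z - Ca n a y * Sa n b z).
  assert (HXY : X ^ 2 + Y ^ 2 = (Ca n a y ^ 2 + Sa n a y ^ 2) * (Ca n b z ^ 2 + Sa n b z ^ 2)) by (unfold X, Y; ring).
  rewrite <- HXY.
  assert (E : (c * X - s * Y) ^ 2 + (s * X + c * Y) ^ 2 = (s^2 + c^2) * (X ^ 2 + Y ^ 2)) by ring.
  rewrite Hcs in E. assert (0 <= (s * X + c * Y) ^ 2) by apply pow2_ge_0. lra.
Qed.

Lemma TS_bound_lam n a b y z ph lam : 0 < lam ->
  Rabs (TS n (fun k l => INR k ^ a * INR l ^ b) y z ph) <= (lam * PA n a y + PA n b z / lam) / 2.
Proof.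
  intros Hl. pose proof (TS_sq_le n a b y z ph) as H.
  pose proof (PA_nonneg n a y). pose proof (PA_nonneg n b z).
  set (T := TS n (fun k l => INR k ^ a * INR l ^ b) y z ph) in *.
  set (P := PA n a y) in *. set (Q := PA n b z) in *.
  assert (HR : 0 <= (lam * P + Q / lam) / 2).
  { assert (0 <= Q / lam) by (apply Rdiv_le_0_compat; lra). nra. }
  assert (Hsq : T ^ 2 <= ((lam * P + Q / lam) / 2) ^ 2).
  { assert (((lam * P + Q / lam) / 2) ^ 2 - P * Q = ((lam * P - Q / lam) / 2) ^ 2).
    { field. lra. }
    assert (0 <= ((lam * P - Q / lam) / 2) ^ 2) by apply pow2_ge_0. lra. }
  rewrite <- (Rabs_pos_eq ((lam * P + Q / lam) / 2)) by lra.
  apply Rsqr_le_abs_0. unfold Rsqr. nra.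
Qed.

Lemma Cs_abs_le n a y c : Rabs (Cs n a y c) <= INR n * INR n ^ a.
Proof.
  unfold Cs. eapply Rle_trans; [apply S1_abs|]. apply S1_const_le.
  intros k Hk. rewrite Rabs_mult, Rabs_pos_eq by (apply pow_le, pos_INR).
  assert (INR k ^ a <= INR n ^ a) by (apply pow_incr; split; [apply pos_INR| apply le_INR; lia]).
  assert (Rabs (cos (INR k * y + c)) <= 1) by (pose proof (COS_bound (INR k * y + c)); apply Rabs_le; lra).
  pose proof (pow_le (INR k) a (pos_INR k)). pose proof (Rabs_pos (cos (INR k * y + c))). nra.
Qed.

Lemma sq_le_le x y : 0 <= x -> 0 <= y -> x ^ 2 <= y ^ 2 -> x <= y.
Proof. intros. destruct (Rle_lt_dec x y); [lra|]. nra. Qed.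

Lemma Rabs_sin_le x : Rabs (sin x) <= Rabs x.
Proof.
  destruct (MVT_gen sin 0 x cos) as [c [_ Hc]].
  - intros; apply is_derive_sin.
  - intros; apply continuity_sin.
  - rewrite sin_0 in Hc. replace (sin x) with (cos c * (x - 0)) by lra.
    rewrite Rabs_mult. replace (x - 0) with x by ring.
    assert (Rabs (cos c) <= 1) by (pose proof (COS_bound c); apply Rabs_le; lra).
    pose proof (Rabs_pos x). nra.
Qed.

Lemma sin_diff_le p q : Rabs (sin (p - q)) <= Rabs (sin p) + Rabs (sin q).
Proof.
  rewrite sin_minus.
  assert (Rabs (cos q) <= 1) by (pose proof (COS_bound q); apply Rabs_le; lra).
  assert (Rabs (cos p) <= 1) by (pose proof (COS_bound p); apply Rabs_le; lra).
  eapply Rle_trans; [apply Rabs_triang|]. rewrite Rabs_Ropp, !Rabs_mult.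
  pose proof (Rabs_pos (sin p)). pose proof (Rabs_pos (sin q)). nra.
Qed.

Lemma Cs_sig n a y c sg d : 0 <= sg -> sg <= Rabs (sin (y/2)) + d -> 0 <= d ->
  sg * Rabs (Cs n a y c) <= INR n ^ a + d * (INR n * INR n ^ a).
Proof.
  intros H0 H1 H2. pose proof (abel n a y c) as HA. rewrite Rabs_mult in HA.
  pose proof (Cs_abs_le n a y c). pose proof (Rabs_pos (Cs n a y c)).
  pose proof (Rabs_pos (sin (y/2))).
  assert (sg * Rabs (Cs n a y c) <= (Rabs (sin (y/2)) + d) * Rabs (Cs n a y c)) by (apply Rmult_le_compat_r; lra).
  nra.
Qed.

Lemma PA_sig n a y sg d D : 0 <= sg -> sg <= Rabs (sin (y/2)) + d -> 0 <= d -> d * INR n <= D ->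
  sg ^ 2 * PA n a y <= 2 * ((1 + D) * INR n ^ a) ^ 2.
Proof.
  intros H0 H1 H2 H3.
  pose proof (Cs_sig n a y 0 sg d H0 H1 H2) as A1.
  pose proof (Cs_sig n a y (- (PI/2)) sg d H0 H1 H2) as A2.
  pose proof (pow_le (INR n) a (pos_INR n)) as Hp.
  assert (Hk : INR n ^ a + d * (INR n * INR n ^ a) <= (1 + D) * INR n ^ a).
  { assert (0 <= (D - d * INR n) * INR n ^ a) by (apply Rmult_le_pos; lra). nra. }
  unfold PA, Ca, Sa.
  pose proof (Rabs_pos (Cs n a y 0)). pose proof (Rabs_pos (Cs n a y (- (PI/2)))).
  assert (E : sg ^ 2 * (Cs n a y 0 ^ 2 + Cs n a y (- (PI / 2)) ^ 2) =
     (sg * Rabs (Cs n a y 0)) ^ 2 + (sg * Rabs (Cs n a y (- (PI/2)))) ^ 2).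
  { rewrite !Rpow_mult_distr, !pow2_abs. ring. }
  rewrite E.
  assert (0 <= sg * Rabs (Cs n a y 0)) by (apply Rmult_le_pos; lra).
  assert (0 <= sg * Rabs (Cs n a y (- (PI/2)))) by (apply Rmult_le_pos; lra).
  assert ((sg * Rabs (Cs n a y 0)) ^ 2 <= ((1 + D) * INR n ^ a) ^ 2) by (apply pow_incr; lra).
  assert ((sg * Rabs (Cs n a y (- (PI/2)))) ^ 2 <= ((1 + D) * INR n ^ a) ^ 2) by (apply pow_incr; lra).
  lra.
Qed.

Lemma T_sig n a b y z ph sg da db D : 0 <= sg ->
  sg <= Rabs (sin (y/2)) + da -> sg <= Rabs (sin (z/2)) + db -> 0 <= da -> 0 <= db ->
  da * INR n <= D -> db * INR n <= D ->
  sg ^ 2 * Rabs (TS n (fun k l => INR k ^ a * INR l ^ b) y z ph) <=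
  2 * (1 + D) ^ 2 * (INR n ^ a * INR n ^ b).
Proof.
  intros. pose proof (PA_sig n a y sg da D) as Ha. pose proof (PA_sig n b z sg db D) as Hb.
  pose proof (TS_sq_le n a b y z ph) as HT.
  set (T := TS n (fun k l => INR k ^ a * INR l ^ b) y z ph) in *.
  pose proof (PA_nonneg n a y). pose proof (PA_nonneg n b z).
  assert (0 <= D) by (pose proof (pos_INR n); nra).
  pose proof (pow_le (INR n) a (pos_INR n)). pose proof (pow_le (INR n) b (pos_INR n)).
  apply sq_le_le.
  - apply Rmult_le_pos; [apply pow_le; lra| apply Rabs_pos].
  - apply Rmult_le_pos; [apply Rmult_le_pos; [lra| apply pow_le; lra]| apply Rmult_le_pos; lra].
  - assert (E : (sg ^ 2 * Rabs T) ^ 2 = (sg ^ 2) ^ 2 * T ^ 2) by (rewrite Rpow_mult_distr, pow2_abs; ring).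
    rewrite E.
    assert ((sg ^ 2) ^ 2 * T ^ 2 <= (sg ^ 2 * PA n a y) * (sg ^ 2 * PA n b z)).
    { replace ((sg ^ 2 * PA n a y) * (sg ^ 2 * PA n b z)) with ((sg ^ 2) ^ 2 * (PA n a y * PA n b z)) by ring.
      apply Rmult_le_compat_l; [apply pow_le; nra| exact HT]. }
    assert ((sg ^ 2 * PA n a y) * (sg ^ 2 * PA n b z) <= (2 * ((1 + D) * INR n ^ a) ^ 2) * (2 * ((1 + D) * INR n ^ b) ^ 2)).
    { apply Rmult_le_compat; try (apply Rmult_le_pos; [apply pow_le; nra| auto]); auto. }
    eapply Rle_trans; [eassumption|]. eapply Rle_trans; [eassumption|]. right. ring.
Qed.

Lemma periodic_nat (f : R -> R) : (forall x, f (x + 2*PI) = f x) ->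
  forall (m : nat) x, f (x + 2*PI*INR m) = f x.
Proof.
  intros Hf m; induction m; intro x.
  - simpl. rewrite Rmult_0_r, Rplus_0_r. reflexivity.
  - rewrite S_INR. replace (x + 2 * PI * (INR m + 1)) with ((x + 2 * PI * INR m) + 2 * PI) by ring.
    rewrite Hf. apply IHm.
Qed.

Lemma periodic_Z (f : R -> R) : (forall x, f (x + 2*PI) = f x) ->
  forall (k : Z) x, f (x + 2*PI*IZR k) = f x.
Proof.
  intros Hf k x. destruct (Z_le_gt_dec 0 k) as [Hk|Hk].
  - rewrite <- (Z2Nat.id k Hk), <- INR_IZR_INZ. apply periodic_nat; auto.
  - replace k with (- Z.of_nat (Z.to_nat (- k)))%Z by lia.
    rewrite opp_IZR, <- INR_IZR_INZ.
    rewrite <- (periodic_nat f Hf (Z.to_nat (-k)) (x + 2 * PI * - INR (Z.to_nat (- k)))).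
    f_equal. ring.
Qed.

Lemma reduce x : exists j : Z, 0 <= x - 2*PI*IZR j <= 2*PI.
Proof.
  pose proof PI_RGT_0 as Hp.
  destruct (archimed (x / (2*PI))) as [H1 H2].
  exists (up (x / (2*PI)) - 1)%Z. rewrite minus_IZR.
  set (u := IZR (up (x / (2 * PI)))) in *.
  assert (E : x = (x / (2*PI)) * (2*PI)) by (field; lra).
  split; nra.
Qed.

Lemma cont_pt_of (psi : R -> R) : (forall x, continuous psi x) -> forall x, continuity_pt psi x.
Proof. intros H x. apply continuity_pt_filterlim. apply H. Qed.

Lemma psi_shift (psi : R -> R) (Hp : forall x, psi (x + 2*PI) = psi x) x j :
  psi x = psi (x - 2*PI*IZR j).
Proof. rewrite <- (periodic_Z psi Hp j (x - 2 * PI * IZR j)). f_equal. ring. Qed.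

Lemma psi_bound (psi : R -> R) : (forall x, continuous psi x) -> (forall x, psi (x + 2*PI) = psi x) ->
  exists B, forall x, psi x <= B.
Proof.
  intros Hc Hp. pose proof PI_RGT_0.
  destruct (continuity_ab_maj psi 0 (2*PI)) as [Mx [HM _]].
  - lra.
  - intros; apply cont_pt_of; auto.
  - exists (psi Mx). intro x. destruct (reduce x) as [j Hj].
    rewrite (psi_shift psi Hp x j). apply HM. exact Hj.
Qed.

Lemma sin_sq_shift d k : sin (d/2 + PI * IZR k) ^ 2 = sin (d/2) ^ 2.
Proof.
  assert (E : forall a, sin a ^ 2 = (1 - cos (2 * a)) / 2).
  { intro a. rewrite cos_2a_sin. field. }
  rewrite !E.
  replace (2 * (d / 2 + PI * IZR k)) with (d + 2 * PI * IZR k) by field.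
  replace (2 * (d / 2)) with d by field.
  rewrite (periodic_Z cos); [reflexivity|]. intro x. rewrite cos_plus, cos_2PI, sin_2PI. ring.
Qed.

Lemma psi_circle (psi : R -> R) : (forall x, continuous psi x) -> (forall x, psi (x + 2*PI) = psi x) ->
  (forall x, 0 < psi x) ->
  forall e, 0 < e -> exists K, 0 <= K /\ forall x s, Rabs (psi x - psi s) <= e + K * sin ((x - s)/2) ^ 2.
Proof.
  intros Hc Hp Hpos e He. pose proof PI_RGT_0 as HPI.
  destruct (psi_bound psi Hc Hp) as [B HB].
  assert (HB0 : 0 < B) by (pose proof (Hpos 0); pose proof (HB 0); lra).
  assert (HU : uniform_continuity psi (fun c => - PI <= c <= 3 * PI)).
  { apply Heine. apply compact_P3. intros; apply cont_pt_of; auto. }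
  destruct (HU (mkposreal e He)) as [dl Hdl]. simpl in Hdl.
  set (d1 := Rmin dl PI).
  assert (Hd1 : 0 < d1 <= PI) by (unfold d1; pose proof (cond_pos dl); split; [apply Rmin_glb_lt; lra| apply Rmin_r]).
  set (c0 := sin (d1/2)).
  assert (Hc0 : 0 < c0) by (unfold c0; apply sin_gt_0; lra).
  exists (B / c0 ^ 2). split.
  { apply Rdiv_le_0_compat; [lra| apply pow_lt; lra]. }
  intros x s.
  assert (Hdiff : Rabs (psi x - psi s) <= B).
  { pose proof (Hpos x); pose proof (Hpos s); pose proof (HB x); pose proof (HB s). apply Rabs_le; lra. }
  destruct (Rle_lt_dec (c0 ^ 2) (sin ((x - s)/2) ^ 2)) as [Hbig|Hsmall].
  - assert (B <= B / c0 ^ 2 * sin ((x - s) / 2) ^ 2).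
    { apply (Rmult_le_reg_r (c0 ^ 2)); [apply pow_lt; lra|].
      replace (B / c0 ^ 2 * sin ((x - s) / 2) ^ 2 * c0 ^ 2) with (B * sin ((x - s) / 2) ^ 2) by (field; lra).
      nra. }
    lra.
  - destruct (reduce (x - s + PI)) as [k Hk].
    set (d := x - s - 2 * PI * IZR k).
    assert (Hd : - PI <= d <= PI) by (unfold d; lra).
    assert (Hsd : sin ((x - s)/2) ^ 2 = sin (d/2) ^ 2).
    { rewrite <- (sin_sq_shift d k). f_equal. f_equal. unfold d. field. }
    assert (Hdl1 : Rabs d < d1).
    { destruct (Rlt_le_dec (Rabs d) d1) as [|Hge]; [assumption|exfalso].
      assert (Hs2 : c0 <= sin (Rabs d / 2)).
      { destruct (Req_dec (Rabs d) d1) as [->|Hne]; [unfold c0; lra|].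
        assert (Hlt : d1 < Rabs d) by (destruct Hge as [Hlt|Heq]; [exact Hlt| exfalso; apply Hne; symmetry; exact Heq]).
        assert (Rabs d <= PI) by (apply Rabs_le; lra). pose proof (Rabs_pos d).
        left. unfold c0. apply sin_increasing_1; lra. }
      assert (sin (Rabs d / 2) ^ 2 = sin (d/2) ^ 2).
      { destruct (Rle_lt_dec 0 d).
        - rewrite Rabs_pos_eq by lra. reflexivity.
        - rewrite Rabs_left by lra. replace (- d / 2) with (- (d/2)) by field. rewrite sin_neg. ring. }
      assert (c0 ^ 2 <= sin (Rabs d / 2) ^ 2) by (apply pow_incr; lra).
      lra. }
    destruct (reduce s) as [j Hj].
    set (s0 := s - 2 * PI * IZR j).
    assert (Ex : psi x = psi (s0 + d)).
    { rewrite (psi_shift psi Hp x (k + j)). f_equal. unfold s0, d. rewrite plus_IZR. ring. }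
    assert (Es : psi s = psi s0) by apply psi_shift, Hp.
    rewrite Ex, Es.
    assert (Rabs (psi (s0 + d) - psi s0) < e).
    { apply Hdl.
      - unfold s0 in *. apply Rabs_def2 in Hdl1. lra.
      - unfold s0 in *; lra.
      - replace (s0 + d - s0) with d by ring. unfold d1 in Hdl1. pose proof (Rmin_l dl PI). lra. }
    assert (0 <= B / c0 ^ 2 * sin ((x - s) / 2) ^ 2).
    { apply Rmult_le_pos; [apply Rdiv_le_0_compat; [lra| apply pow_lt; lra]| apply pow2_ge_0]. }
    lra.
Qed.

Definition gf m c w (t : R) := t ^ m * cos (t * w + c).
Definition gen m c w := RInt (gf m c w) 0 1.

Lemma pow_le_1' t k : 0 <= t <= 1 -> 0 <= t ^ k <= 1.
Proof. intros H. split; [apply pow_le; lra|]. rewrite <- (pow1 k). apply pow_incr; lra. Qed.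

Lemma gf_cont m c w t : continuous (gf m c w) t.
Proof. apply (@ex_derive_continuous R_AbsRing R_NormedModule). unfold gf. auto_derive. exact I. Qed.

Lemma gf_exRInt m c w a b : ex_RInt (gf m c w) a b.
Proof. apply (@ex_RInt_continuous R_CompleteNormedModule). intros; apply gf_cont. Qed.

Lemma gf_lip m c w t1 t2 : 0 <= t1 <= 1 -> 0 <= t2 <= 1 ->
  Rabs (gf m c w t1 - gf m c w t2) <= (INR m + Rabs w) * Rabs (t1 - t2).
Proof.
  intros H1 H2.
  destruct (MVT_gen (gf m c w) t2 t1 (fun x => INR m * x ^ Init.Nat.pred m * cos (x * w + c) + x ^ m * (w * - sin (x * w + c)))) as [x [Hx E]].
  - intros x _. unfold gf. auto_derive; [exact I|]. ring.
  - intros; apply cont_pt_of; intros; apply gf_cont.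
  - rewrite E, Rabs_mult. apply Rmult_le_compat_r; [apply Rabs_pos|].
    assert (Hx' : 0 <= x <= 1).
    { split; [apply Rle_trans with (Rmin t2 t1); [apply Rmin_glb; lra| apply Hx]|
              apply Rle_trans with (Rmax t2 t1); [apply Hx| apply Rmax_lub; lra]]. }
    pose proof (pow_le_1' x (Init.Nat.pred m) Hx'). pose proof (pow_le_1' x m Hx').
    assert (Rabs (cos (x * w + c)) <= 1) by (pose proof (COS_bound (x * w + c)); apply Rabs_le; lra).
    assert (Rabs (sin (x * w + c)) <= 1) by apply Rabs_sin_le1.
    pose proof (pos_INR m).
    eapply Rle_trans; [apply Rabs_triang|]. rewrite !Rabs_mult, Rabs_Ropp.
    rewrite (Rabs_pos_eq (INR m)) by lra. rewrite (Rabs_pos_eq (x ^ _)) by lra. rewrite (Rabs_pos_eq (x ^ m)) by lra.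
    pose proof (Rabs_pos w). pose proof (Rabs_pos (cos (x * w + c))). pose proof (Rabs_pos (sin (x * w + c))).
    assert (INR m * x ^ Init.Nat.pred m * Rabs (cos (x * w + c)) <= INR m).
    { assert (x ^ Init.Nat.pred m * Rabs (cos (x * w + c)) <= 1) by nra. nra. }
    assert (x ^ m * (Rabs w * Rabs (sin (x * w + c))) <= Rabs w).
    { assert (x ^ m * Rabs (sin (x * w + c)) <= 1) by nra. nra. }
    lra.
Qed.

Lemma gen_chasles m c w n j : (0 < n)%nat ->
  RInt (gf m c w) 0 (INR j / INR n) = S1 j (fun k => RInt (gf m c w) ((INR k - 1) / INR n) (INR k / INR n)).
Proof.
  intros Hn. induction j.
  - simpl. replace (0 / INR n) with 0 by (unfold Rdiv; ring). rewrite RInt_point. reflexivity.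
  - cbn [S1]. rewrite <- IHj.
    rewrite S_INR. replace (INR j + 1 - 1) with (INR j) by ring.
    symmetry. apply (RInt_Chasles (gf m c w)); apply gf_exRInt.
Qed.

Lemma S1_minus n f g : S1 n f - S1 n g = S1 n (fun k => f k - g k).
Proof. induction n; simpl; [ring|]. rewrite <- IHn. ring. Qed.

Lemma riemann m c w n : (0 < n)%nat ->
  Rabs (S1 n (fun k => INR k ^ m * cos (INR k * (w / INR n) + c)) / INR n ^ (m + 1) - gen m c w)
  <= (INR m + Rabs w) / INR n.
Proof.
  intros Hn. assert (HN : 0 < INR n) by (apply lt_0_INR; lia).
  set (L := INR m + Rabs w).
  assert (HL : 0 <= L) by (unfold L; pose proof (pos_INR m); pose proof (Rabs_pos w); lra).
  unfold gen. replace (RInt (gf m c w) 0 1) with (RInt (gf m c w) 0 (INR n / INR n)) by (f_equal; field; lra).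
  rewrite gen_chasles by lia.
  assert (E : S1 n (fun k => INR k ^ m * cos (INR k * (w / INR n) + c)) / INR n ^ (m + 1) =
              S1 n (fun k => / INR n * gf m c w (INR k / INR n))).
  { unfold Rdiv at 1. rewrite Rmult_comm, <- S1_scal. apply S1_ext; intro k. unfold gf.
    rewrite pow_add. unfold Rdiv. rewrite Rpow_mult_distr, pow_inv.
    replace (INR k * / INR n * w + c) with (INR k * (w * / INR n) + c) by ring. simpl pow. field. split; [apply pow_nonzero|]; lra. }
  rewrite E, S1_minus.
  eapply Rle_trans; [apply S1_abs|].
  replace (L / INR n) with (INR n * (L / INR n / INR n)) by (field; lra).
  apply S1_const_le. intros k Hk.
  assert (Hk1 : 1 <= INR k <= INR n) by (split; [apply (le_INR 1) | apply le_INR]; lia).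
  set (a := (INR k - 1) / INR n). set (b := INR k / INR n).
  assert (Hab : 0 <= a <= b /\ b <= 1 /\ b - a = / INR n).
  { unfold a, b; repeat split; try (unfold Rdiv; apply Rmult_le_compat_r; try (left; apply Rinv_0_lt_compat); lra).
    - apply Rdiv_le_0_compat; lra.
    - apply (Rmult_le_reg_r (INR n)); [lra|]. unfold Rdiv. rewrite Rmult_assoc, Rinv_l by lra. lra.
    - field. lra. }
  assert (Ec : RInt (gf m c w) a b - / INR n * gf m c w b = RInt (fun t => gf m c w t - gf m c w b) a b).
  { rewrite (RInt_minus (gf m c w) (fun _ => gf m c w b)); [|apply gf_exRInt| apply ex_RInt_const].
    rewrite RInt_const. destruct Hab as [_ [_ Hba]]. rewrite Hba. reflexivity. }
  replace (/ INR n * gf m c w b - RInt (gf m c w) a b) with (- (RInt (gf m c w) a b - / INR n * gf m c w b)) by ring.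
  rewrite Rabs_Ropp, Ec.
  destruct Hab as [Hab [Hb1 Hba]].
  eapply Rle_trans.
  - apply (abs_RInt_le_const _ a b (L / INR n)); [lra| |].
    + apply (ex_RInt_minus (gf m c w) (fun _ => gf m c w b)); [apply gf_exRInt| apply ex_RInt_const].
    + intros t Ht. eapply Rle_trans; [apply gf_lip; lra|].
      fold L. apply Rmult_le_compat_l; [lra|]. rewrite Rabs_left1 by lra. lra.
  - rewrite Hba. right. field. lra.
Qed.
Lemma sinc_gen w : sinc w = gen 0 0 w.
Proof.
  unfold sinc, gen, gf. destruct (Req_EM_T w 0) as [->|Hw].
  - rewrite (RInt_ext _ (fun _ => 1)).
    + rewrite RInt_const. unfold scal; simpl; unfold mult; simpl. req; ring.
    + intros x _. simpl. rewrite Rmult_0_r, Rplus_0_r, cos_0. req; ring.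
  - assert (Hi : is_RInt (fun t => t ^ 0 * cos (t * w + 0)) 0 1 (minus (sin (1 * w) / w) (sin (0 * w) / w))).
    { apply (is_RInt_derive (fun t => sin (t * w) / w)).
      - intros x _. auto_derive; [exact I|]. rewrite Rplus_0_r. simpl. field. exact Hw.
      - intros x _. apply (gf_cont 0 0 w). }
    rewrite (is_RInt_unique _ _ _ _ Hi). unfold minus, plus, opp; simpl.
    rewrite Rmult_0_l, sin_0, Rmult_1_l. req; field. exact Hw.
Qed.

Lemma gen_derive m c w : is_derive (gen m c) w (gen (S m) (c + PI/2) w).
Proof.
  unfold gen.
  assert (HD : forall t u, is_derive (fun z => gf m c z t) u (- (t ^ S m * sin (t * u + c)))).
  { intros t u. unfold gf. auto_derive; [exact I|]. simpl. ring. }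
  assert (H : is_derive (fun x => RInt (fun t => gf m c x t) 0 1) w
                 (RInt (fun t => Derive (fun u => gf m c u t) w) 0 1)).
  { apply (is_derive_RInt_param (fun x t => gf m c x t)).
    - apply filter_forall. intros x t _. eexists. apply HD.
    - intros t _. apply continuity_2d_pt_ext with (fun u v => - (v ^ S m * sin (v * u + c))).
      + intros u v. symmetry. apply is_derive_unique, HD.
      + apply continuity_2d_pt_opp. apply continuity_2d_pt_mult.
        * apply (continuity_1d_2d_pt_comp (fun v => v ^ S m) (fun _ v => v)).
          -- apply derivable_continuous_pt, derivable_pt_pow.
          -- apply continuity_2d_pt_id2.
        * apply (continuity_1d_2d_pt_comp sin (fun u v => v * u + c)).
          -- apply continuity_sin.
          -- apply continuity_2d_pt_plus; [apply continuity_2d_pt_mult; [apply continuity_2d_pt_id2| apply continuity_2d_pt_id1]| apply continuity_2d_pt_const].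
    - apply filter_forall. intros x. apply gf_exRInt. }
  replace (RInt (gf (S m) (c + PI / 2) w) 0 1) with (RInt (fun t => Derive (fun u => gf m c u t) w) 0 1).
  - exact H.
  - apply RInt_ext. intros t _. replace (Derive (fun u => gf m c u t) w) with (- (t ^ S m * sin (t * w + c))) by (symmetry; apply is_derive_unique, HD). unfold gf.
    replace (t * w + (c + PI / 2)) with ((t * w + c) + PI/2) by ring. rewrite cos_pPI2. simpl. ring.
Qed.

Lemma Dsinc m : forall w, Derive_n sinc m w = gen m (INR m * (PI/2)) w.
Proof.
  induction m; intro w.
  - simpl. rewrite sinc_gen. f_equal. ring.
  - simpl Derive_n. rewrite (Derive_ext _ _ _ IHm).
    rewrite (is_derive_unique _ _ _ (gen_derive _ _ _)). f_equal. rewrite S_INR. ring.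
Qed.

Lemma cos_shift_b x b : (-1) ^ b * cos (x + INR b * PI) = cos x.
Proof.
  induction b.
  - simpl. rewrite Rmult_0_l, Rplus_0_r. ring.
  - rewrite S_INR. replace (x + (INR b + 1) * PI) with ((x + INR b * PI) + PI) by ring.
    rewrite neg_cos. simpl. rewrite <- IHb. ring.
Qed.

Lemma gen_sign a b w :
  (-1) ^ b * gen (a + b) (INR (a + b) * (PI/2)) w = gen (a + b) (INR a * (PI/2) - INR b * (PI/2)) w.
Proof.
  unfold gen. rewrite <- RInt_lin1 by apply gf_exRInt.
  apply RInt_ext. intros t _. unfold gf.
  rewrite <- (cos_shift_b (t * w + (INR a * (PI / 2) - INR b * (PI / 2))) b).
  rewrite plus_INR. replace (t * w + (INR a * (PI / 2) - INR b * (PI / 2)) + INR b * PI)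
    with (t * w + (INR a + INR b) * (PI / 2)) by field. req; ring.
Qed.

Lemma nat_above r : exists N, r < INR N /\ (1 <= N)%nat.
Proof.
  destruct (archimed (Rabs r)) as [H1 _].
  assert (Hz : (0 <= up (Rabs r))%Z).
  { apply le_IZR. pose proof (Rabs_pos r). simpl. lra. }
  exists (S (Z.to_nat (up (Rabs r)))). split; [|lia].
  rewrite S_INR, INR_IZR_INZ, Z2Nat.id by exact Hz.
  pose proof (Rle_abs r). lra.
Qed.

Lemma RInt_abs_bound f g a b : a <= b -> ex_RInt f a b -> ex_RInt g a b ->
  (forall x, Rabs (f x) <= g x) -> Rabs (RInt f a b) <= RInt g a b.
Proof.
  intros Hab Hf Hg H. apply Rabs_le. split.
  - assert (RInt (fun x => -1 * g x) a b <= RInt f a b).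
    { apply RInt_le; auto. apply (ex_RInt_scal g a b (-1) Hg).
      intros x _. pose proof (H x). apply Rabs_le_between in H0 . lra. }
    rewrite RInt_lin1 in H0 by exact Hg. lra.
  - apply RInt_le; auto. intros x _. pose proof (H x). pose proof (Rle_abs (f x)). lra.
Qed.

Lemma RInt_lin3 (f g : R -> R) c1 c2 c3 a b : ex_RInt f a b -> ex_RInt g a b ->
  RInt (fun x => c1 * f x + c2 * g x + c3) a b = c1 * RInt f a b + c2 * RInt g a b + (b - a) * c3.
Proof.
  intros Hf Hg.
  assert (Hfg : ex_RInt (fun x => c1 * f x + c2 * g x) a b).
  { apply (ex_RInt_plus (fun x => c1 * f x) (fun x => c2 * g x)).
    apply (ex_RInt_scal f a b c1 Hf). apply (ex_RInt_scal g a b c2 Hg). }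
  rewrite (RInt_plus (fun x => c1 * f x + c2 * g x) (fun _ => c3)); [|exact Hfg| apply ex_RInt_const].
  pose proof (RInt_lin2 f g c1 c2 a b Hf Hg) as E. simpl in E |- *. unfold plus; simpl.
  rewrite E, RInt_const. unfold scal; simpl; unfold mult; simpl. reflexivity.
Qed.

Lemma exRInt_PA n a s lo hi : ex_RInt (fun x => PA n a (s - x)) lo hi.
Proof.
  apply ex_RInt_ext with (fun x => TS n (fun k l => INR k ^ a * INR l ^ a) (s - x) (s - x) 0).
  - intros; symmetry; apply PA_TS.
  - apply exRInt_TS.
Qed.

Lemma int_PA n a s : RInt (fun x => PA n a (s - x)) 0 (2 * PI) <= 2 * PI * (INR n * (INR n ^ a * INR n ^ a)).
Proof.
  rewrite (RInt_ext _ (fun x => TS n (fun k l => INR k ^ a * INR l ^ a) (s - x) (s - x) 0)).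
  2:{ intros; apply PA_TS. }
  rewrite int_TS. pose proof PI_RGT_0.
  apply Rmult_le_compat_l; [lra|]. apply S1_const_le. intros k Hk.
  replace (INR k * (s - s) + 0) with 0 by ring. rewrite cos_0, Rmult_1_r.
  assert (INR k ^ a <= INR n ^ a) by (apply pow_incr; split; [apply pos_INR| apply le_INR; lia]).
  pose proof (pow_le (INR k) a (pos_INR k)). nra.
Qed.

Theorem lemma2 (rho : Z -> R) (psi : R -> R) (a b : nat) :
  spectral_density rho psi ->
  (a <= 4)%nat -> (b <= 4)%nat ->
  forall M eps : R, 0 < eps ->
  exists N : nat, forall n : nat, (N <= n)%nat ->
  forall s u v : R, Rabs u <= M -> Rabs v <= M ->
  Rabs (/ (INR n ^ (a + b)) * rn_deriv rho n a b (s + u / INR n) (s + v / INR n)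
        - psi s * (-1) ^ b * Derive_n sinc (a + b) (u - v)) < eps.
Proof.
  intros Hs _ _ M eps Heps.
  pose proof Hs as [Hc [Hp [Hpos _]]].
  pose proof PI_RGT_0 as HPI.
  destruct (psi_circle psi Hc Hp Hpos (eps/2)) as [K [HK0 HK]]; [lra|].
  destruct (psi_bound psi Hc Hp) as [B HB].
  assert (HB0 : 0 < B) by (pose proof (Hpos 0); pose proof (HB 0); lra).
  set (m := (a + b)%nat).
  set (D := Rabs M / 2).
  assert (HD0 : 0 <= D) by (unfold D; pose proof (Rabs_pos M); lra).
  set (C := K * (2 * (1 + D) ^ 2) + B * (INR m + 2 * Rabs M)).
  assert (HC : 0 <= C).
  { unfold C. pose proof (pos_INR m). pose proof (Rabs_pos M).
    apply Rplus_le_le_0_compat; apply Rmult_le_pos; try lra; apply Rmult_le_pos; try lra; apply pow_le; lra. }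
  destruct (nat_above (2 * C / eps)) as [N [HN HN1]].
  exists N. intros n Hn s u v Hu Hv.
  set (Nn := INR n).
  assert (HNn : 0 < Nn) by (unfold Nn; apply lt_0_INR; lia).
  assert (HNN : INR N <= Nn) by (apply le_INR; lia).
  set (s' := s + u / Nn). set (t' := s + v / Nn).
  set (ph := INR a * (PI/2) - INR b * (PI/2)).
  set (T := fun x => TS n (fun k l => INR k ^ a * INR l ^ b) (s' - x) (t' - x) ph).
  set (I1 := RInt (fun x => psi x * T x) 0 (2 * PI)).
  set (I0 := RInt T 0 (2 * PI)).
  set (Z := 2 * PI * Nn ^ (m + 1)).
  assert (HZ : 0 < Z) by (unfold Z; apply Rmult_lt_0_compat; [lra| apply pow_lt; lra]).
  assert (EQ1 : / Nn ^ m * rn_deriv rho n a b s' t' = I1 / Z).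
  { rewrite rn_deriv_TS. unfold I1, T.
    rewrite (rho_TS rho psi Hs). fold Nn. fold ph. unfold Z. rewrite pow_add. simpl pow.
    field. split; [lra| split; [apply pow_nonzero; lra| lra]]. }
  set (G := gen m ph (u - v)).
  assert (EQ2 : psi s * (-1) ^ b * Derive_n sinc m (u - v) = psi s * G).
  { rewrite Dsinc. unfold G, m, ph. rewrite Rmult_assoc, gen_sign. reflexivity. }
  set (Rs := S1 n (fun k => INR k ^ m * cos (INR k * ((u - v) / Nn) + ph)) / Nn ^ (m + 1)).
  assert (EQ3 : I0 / Z = Rs).
  { unfold I0, T. rewrite int_TS. unfold Rs, Z.
    replace (S1 n (fun k => INR k ^ a * INR k ^ b * cos (INR k * (s' - t') + ph)))
      with (S1 n (fun k => INR k ^ m * cos (INR k * ((u - v) / Nn) + ph))).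
    - field. split; [apply pow_nonzero; lra| lra].
    - apply S1_ext; intro k. unfold m. rewrite pow_add. f_equal. f_equal. f_equal. unfold s', t'. field. lra. }
  assert (HR : Rabs (Rs - G) <= (INR m + Rabs (u - v)) / Nn).
  { unfold Rs, G. apply riemann. lia. }
  set (e := eps / 2).
  set (lam := Nn ^ b / Nn ^ a).
  assert (Hlam : 0 < lam) by (unfold lam; apply Rdiv_lt_0_compat; apply pow_lt; lra).
  set (g := fun x => (e * lam / 2) * PA n a (s' - x) + (e / (2 * lam)) * PA n b (t' - x)
                      + K * (2 * (1 + D) ^ 2 * (Nn ^ a * Nn ^ b))).
  assert (Hdiff : I1 - psi s * I0 = RInt (fun x => (psi x - psi s) * T x) 0 (2 * PI)).
  { unfold I1, I0.
    rewrite (RInt_ext (fun x => (psi x - psi s) * T x) (fun x => 1 * (psi x * T x) + (- psi s) * T x)).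
    2:{ intros; req; ring. }
    rewrite RInt_lin2; [ring| apply exRInt_psi_TS; auto| apply exRInt_TS]. }
  assert (Hpt : forall x, Rabs ((psi x - psi s) * T x) <= g x).
  { intro x. rewrite Rabs_mult.
    pose proof (HK x s) as Hk.
    set (sg := Rabs (sin ((x - s) / 2))).
    assert (Hsg2 : sin ((x - s) / 2) ^ 2 = sg ^ 2) by (unfold sg; rewrite pow2_abs; reflexivity).
    rewrite Hsg2 in Hk.
    assert (HT1 : Rabs (T x) <= (lam * PA n a (s' - x) + PA n b (t' - x) / lam) / 2) by (apply TS_bound_lam; exact Hlam).
    assert (HT2 : sg ^ 2 * Rabs (T x) <= 2 * (1 + D) ^ 2 * (Nn ^ a * Nn ^ b)).
    { apply (T_sig n a b (s' - x) (t' - x) ph sg (Rabs (sin (u / Nn / 2))) (Rabs (sin (v / Nn / 2))) D).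
      - apply Rabs_pos.
      - unfold sg. replace ((x - s) / 2) with (u / Nn / 2 - (s' - x) / 2) by (unfold s'; field; lra).
        rewrite Rplus_comm. apply sin_diff_le.
      - unfold sg. replace ((x - s) / 2) with (v / Nn / 2 - (t' - x) / 2) by (unfold t'; field; lra).
        rewrite Rplus_comm. apply sin_diff_le.
      - apply Rabs_pos.
      - apply Rabs_pos.
      - eapply Rle_trans; [apply Rmult_le_compat_r; [apply pos_INR| apply Rabs_sin_le]|]. fold Nn.
        unfold D. replace (Rabs (u / Nn / 2) * Nn) with (Rabs u / 2).
        + pose proof (Rle_abs M). lra.
        + unfold Rdiv. rewrite !Rabs_mult, !Rabs_inv, (Rabs_pos_eq Nn), (Rabs_pos_eq 2) by lra. field. lra.
      - eapply Rle_trans; [apply Rmult_le_compat_r; [apply pos_INR| apply Rabs_sin_le]|]. fold Nn.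
        unfold D. replace (Rabs (v / Nn / 2) * Nn) with (Rabs v / 2).
        + pose proof (Rle_abs M). lra.
        + unfold Rdiv. rewrite !Rabs_mult, !Rabs_inv, (Rabs_pos_eq Nn), (Rabs_pos_eq 2) by lra. field. lra. }
    pose proof (Rabs_pos (T x)). pose proof (Rabs_pos (psi x - psi s)).
    assert (Rabs (psi x - psi s) * Rabs (T x) <= (e + K * sg ^ 2) * Rabs (T x)) by (apply Rmult_le_compat_r; unfold e; lra).
    unfold g. unfold e in *.
    assert (E1 : (eps / 2 * lam / 2) * PA n a (s' - x) + (eps / 2 / (2 * lam)) * PA n b (t' - x)
                 = eps / 2 * ((lam * PA n a (s' - x) + PA n b (t' - x) / lam) / 2)) by (field; lra).
    assert (eps / 2 * Rabs (T x) <= eps / 2 * ((lam * PA n a (s' - x) + PA n b (t' - x) / lam) / 2))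
      by (apply Rmult_le_compat_l; lra).
    assert (K * (sg ^ 2 * Rabs (T x)) <= K * (2 * (1 + D) ^ 2 * (Nn ^ a * Nn ^ b)))
      by (apply Rmult_le_compat_l; lra).
    nra. }
  assert (Hint : Rabs (I1 - psi s * I0) <= RInt g 0 (2 * PI)).
  { rewrite Hdiff. apply RInt_abs_bound; [lra| | |exact Hpt].
    - apply (ex_RInt_ext (fun x => 1 * (psi x * T x) + (- psi s) * T x)).
      { intros; req; ring. }
      apply (ex_RInt_plus (fun x => 1 * (psi x * T x)) (fun x => (- psi s) * T x)).
      + apply (ex_RInt_scal (fun x => psi x * T x)). apply exRInt_psi_TS; auto.
      + apply (ex_RInt_scal T). apply exRInt_TS.
    - unfold g. apply (ex_RInt_plus (fun x => e * lam / 2 * PA n a (s' - x) + e / (2 * lam) * PA n b (t' - x)) (fun _ => K * (2 * (1 + D) ^ 2 * (Nn ^ a * Nn ^ b)))).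
      + apply (ex_RInt_plus (fun x => e * lam / 2 * PA n a (s' - x)) (fun x => e / (2 * lam) * PA n b (t' - x))).
        * apply (ex_RInt_scal (fun x => PA n a (s' - x))). apply exRInt_PA.
        * apply (ex_RInt_scal (fun x => PA n b (t' - x))). apply exRInt_PA.
      + apply ex_RInt_const. }
  assert (Hg : RInt g 0 (2 * PI) <= e * Z + 2 * PI * (K * (2 * (1 + D) ^ 2 * (Nn ^ a * Nn ^ b)))).
  { unfold g. rewrite (RInt_lin3 (fun x => PA n a (s' - x)) (fun x => PA n b (t' - x))) by apply exRInt_PA.
    pose proof (int_PA n a s') as P1. pose proof (int_PA n b t') as P2. fold Nn in P1, P2.
    assert (He : 0 < e) by (unfold e; lra).
    assert (C1 : e * lam / 2 * RInt (fun x => PA n a (s' - x)) 0 (2 * PI) <= e * lam / 2 * (2 * PI * (Nn * (Nn ^ a * Nn ^ a))))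
      by (apply Rmult_le_compat_l; [apply Rmult_le_pos; [apply Rmult_le_pos|]; lra| exact P1]).
    assert (C2 : e / (2 * lam) * RInt (fun x => PA n b (t' - x)) 0 (2 * PI) <= e / (2 * lam) * (2 * PI * (Nn * (Nn ^ b * Nn ^ b))))
      by (apply Rmult_le_compat_l; [apply Rdiv_le_0_compat; lra| exact P2]).
    assert (C3 : e * lam / 2 * (2 * PI * (Nn * (Nn ^ a * Nn ^ a))) + e / (2 * lam) * (2 * PI * (Nn * (Nn ^ b * Nn ^ b))) = e * Z).
    { unfold Z, lam, m. rewrite !pow_add. simpl pow. field. split; apply pow_nonzero; lra. }
    lra. }
  change (INR n) with Nn. fold s' t'. fold m. rewrite EQ1, EQ2.
  replace (I1 / Z - psi s * G) with ((I1 - psi s * I0) / Z + psi s * (I0 / Z - G)) by (field; lra).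
  rewrite EQ3.
  eapply Rle_lt_trans; [apply Rabs_triang|].
  rewrite Rabs_mult, Rabs_div by lra. rewrite (Rabs_pos_eq Z) by lra. rewrite (Rabs_pos_eq (psi s)) by (left; apply Hpos).
  assert (Huv : Rabs (u - v) <= 2 * Rabs M).
  { unfold Rminus. eapply Rle_trans; [apply Rabs_triang|]. rewrite Rabs_Ropp. pose proof (Rle_abs M). lra. }
  assert (B1 : Rabs (I1 - psi s * I0) / Z <= e + K * (2 * (1 + D) ^ 2) / Nn).
  { apply (Rmult_le_reg_r Z); [lra|]. unfold Rdiv at 1. rewrite Rmult_assoc, Rinv_l, Rmult_1_r by lra.
    eapply Rle_trans; [exact Hint|]. eapply Rle_trans; [exact Hg|].
    right. unfold Z, m. rewrite !pow_add. simpl pow. field. lra. }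
  assert (B2 : psi s * Rabs (Rs - G) <= B * (INR m + 2 * Rabs M) / Nn).
  { pose proof (Hpos s). pose proof (HB s). pose proof (Rabs_pos (Rs - G)).
    assert (Rabs (Rs - G) <= (INR m + 2 * Rabs M) / Nn).
    { eapply Rle_trans; [exact HR|]. unfold Rdiv. apply Rmult_le_compat_r; [left; apply Rinv_0_lt_compat; lra| lra]. }
    assert (0 <= (INR m + 2 * Rabs M) / Nn) by (apply Rdiv_le_0_compat; [pose proof (pos_INR m); pose proof (Rabs_pos M); lra| lra]).
    unfold Rdiv in *. nra. }
  assert (B3 : K * (2 * (1 + D) ^ 2) / Nn + B * (INR m + 2 * Rabs M) / Nn = C / Nn) by (unfold C; field; lra).
  assert (B4 : C / Nn < eps / 2).
  { apply (Rmult_lt_reg_r Nn); [lra|]. unfold Rdiv. rewrite Rmult_assoc, Rinv_l, Rmult_1_r by lra.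
    assert (2 * C / eps < Nn) by lra.
    apply (Rmult_lt_reg_r (2 / eps)); [apply Rdiv_lt_0_compat; lra|].
    replace (C * (2 / eps)) with (2 * C / eps) by (field; lra).
    replace (eps * / 2 * Nn * (2 / eps)) with Nn by (field; lra). lra. }
  unfold e in B1. lra.
Qed.
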